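(* Let $n\ge 2$ and let $\Delta^o(SD_{8n})$ be the order super commuting graph of the semidihedral group $SD_{8n}$. Then the Sombor spectrum of $\Delta^o(SD_{8n})$ consists of $-(8n-1)\sqrt2$ with multiplicity $8n-1$ and $(8n-1)^2\sqrt2$ with multiplicity $1$.
   Context: For a finite simple graph $\Gamma$ with vertices $u_1,\dots,u_N$, the Sombor matrix $S(\Gamma)$ has $(i,j)$ entry $\sqrt{\deg(u_i)^2+\deg(u_j)^2}$ if $u_i,u_j$ are adjacent and $0$ otherwise; the Sombor spectrum is the multiset of its eigenvalues. $SD_{8n}=\langle a,b: a^{4n}=b^2=e,\ ba=a^{2n-1}b\rangle$. The order super commuting graph $\Delta^o(G)$ has vertex set $G$, and distinct $g,h$ are adjacent iff $o(g)=o(h)$ or there exist distinct $g',h'\in G$ with $o(g')=o(g)$, $o(h')=o(h)$ and $g'h'=h'g'$; here $o(x)$ is the order of $x$. *)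

(* Defs.v *)
From HB Require Import structures.
From mathcomp Require Import all_boot all_order all_algebra all_fingroup.
Set Implicit Arguments. Unset Strict Implicit. Unset Printing Implicit Defensive.
Import GRing.Theory Num.Theory.

Definition osc_adj (gT : finGroupType) (G : {group gT}) (g h : gT) : bool :=
  ((g != h) &&
  ((#[g] == #[h]) ||
   [exists g' in G, exists h' in G,
      [&& g' != h', #[g'] == #[g], #[h'] == #[h] & (g' * h' == h' * g')]]))%g.

Definition osc_deg (gT : finGroupType) (G : {group gT}) (g : gT) : nat :=
  #|[set h in G | osc_adj G g h]|.

Definition sombor_mx (R : rcfType) (gT : finGroupType) (G : {group gT})
  : 'M[R]_#|G| :=
  \matrix_(i, j)
    (let u := enum_val i in let v := enum_val j in
     if osc_adj G u v
     then Num.sqrt ((osc_deg G u)%:R ^+ 2 + (osc_deg G v)%:R ^+ 2)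
     else 0)%R.

(* Main.v *)
Require Import Defs.
From HB Require Import structures.
From mathcomp Require Import all_boot all_order all_algebra all_fingroup.
From mathcomp Require Import all_solvable ring zify.
Import GRing.Theory Num.Theory.
Local Open Scope group_scope.

Lemma ba_pow (gT : finGroupType) (a b : gT) k j :
  (b * a = a ^+ k * b)%g -> (b * a ^+ j = a ^+ (k * j) * b)%g.
Proof.
move=> H; elim: j => [|j IH]; first by rewrite !expg0 muln0 expg0 mulg1 mul1g.
by rewrite expgSr mulgA IH -mulgA H mulgA -expgD mulnS addnC.
Qed.

Lemma sd_struct (gT : finGroupType) (G : {group gT}) (a b : gT) n :
  (1 <= n)%N ->
  (a ^+ (4 * n) = 1)%g -> (b ^+ 2 = 1)%g -> (b * a = a ^+ (2 * n - 1) * b)%g ->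
  G :=: <<[set a; b]>>%g -> #|G| = (8 * n)%N ->
  #[a]%g = (4 * n)%N /\ forall x, x \in G -> (#[x]%g %| 4 * n)%N.
Proof.
move=> n1 Ha Hb Hba HG HGc.
set k := (2 * n - 1)%N.
pose S := [set (a ^+ (nat_of_ord p.1) * (if p.2 then b else 1))%g | p : 'I_#[a] * bool].
have inS : forall i (c : bool), (a ^+ i * (if c then b else 1))%g \in S.
  move=> i c; apply/imsetP.
  exists (Ordinal (ltn_pmod i (order_gt0 a)), c) => //=.
  by rewrite expg_mod_order.
have gS : group_set S.
  apply/group_setP; split; first by have := inS 0%N false; rewrite expg0 mulg1.
  move=> x y /imsetP [[i c] _ ->] /imsetP [[j d] _ ->] /=.
  case: c; case: d.
  - have -> : (a ^+ i * b * (a ^+ j * b) = a ^+ (i + k * j) * 1)%g.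
      by rewrite mulg1 mulgA -(mulgA _ b) (@ba_pow _ _ _ _ _ Hba) mulgA -expgD -mulgA -expg2 Hb mulg1.
    exact (inS _ false).
  - have -> : (a ^+ i * b * (a ^+ j * 1) = a ^+ (i + k * j) * b)%g.
      by rewrite mulg1 -mulgA (@ba_pow _ _ _ _ _ Hba) mulgA -expgD.
    exact (inS _ true).
  - have -> : (a ^+ i * 1 * (a ^+ j * b) = a ^+ (i + j) * b)%g.
      by rewrite mulg1 mulgA -expgD.
    exact (inS _ true).
  - have -> : (a ^+ i * 1 * (a ^+ j * 1) = a ^+ (i + j) * 1)%g.
      by rewrite !mulg1 -expgD.
    exact (inS _ false).
have GS : G \subset S.
  rewrite HG (gen_subG _ (Group gS)); apply/subsetP => x; rewrite !inE => /orP [] /eqP ->.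
  - by have := inS 1%N false; rewrite expg1 mulg1.
  - by have := inS 0%N true; rewrite expg0 mul1g.
have cardS : (#|S| <= 2 * #[a])%N.
  apply: leq_trans (leq_imset_card _ _) _.
  by rewrite cardT -cardE card_prod card_ord card_bool mulnC.
have oa : #[a]%g = (4 * n)%N.
  have d : (#[a] %| 4 * n)%N by rewrite order_dvdn Ha.
  have l1 := dvdn_leq (ltac:(lia) : (0 < 4 * n)%N) d.
  have l2 : (#|G| <= #|S|)%N := subset_leq_card GS.
  lia.
split => // x /(subsetP GS) /imsetP [[i c] _ ->] /=.
rewrite order_dvdn; case: c.
- have x2 : ((a ^+ i * b) ^+ 2 = a ^+ (2 * n * i))%g.
    rewrite expg2 mulgA -(mulgA _ b) (@ba_pow _ _ _ _ _ Hba) mulgA -expgD -mulgA -expg2 Hb mulg1.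
    congr (a ^+ _); rewrite /k; nia.
  have -> : (4 * n = 2 * (2 * n))%N by lia.
  have e : (2 * n * i * (2 * n) = 4 * n * (n * i))%N by nia.
  by rewrite expgM x2 -expgM e expgM Ha expg1n.
- by rewrite mulg1 -expgM mulnC expgM Ha expg1n.
Qed.
Lemma osc_complete (gT : finGroupType) (G : {group gT}) (a b : gT) n :
  (1 <= n)%N ->
  (a ^+ (4 * n) = 1)%g -> (b ^+ 2 = 1)%g -> (b * a = a ^+ (2 * n - 1) * b)%g ->
  G :=: <<[set a; b]>>%g -> #|G| = (8 * n)%N ->
  forall g h, g \in G -> h \in G -> g != h -> osc_adj G g h.
Proof.
move=> n1 Ha Hb Hba HG HGc g h gG hG gh.
have [oa dv] := @sd_struct _ _ _ _ _ n1 Ha Hb Hba HG HGc.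
have aG : a \in G by rewrite HG mem_gen // !inE eqxx.
have ord : forall x, x \in G -> #[a ^+ (#[a] %/ #[x])]%g = #[x]%g.
  move=> x xG; have dx : (#[x]%g %| #[a]%g)%N by rewrite oa dv.
  rewrite orderXdiv ?dvdn_div //.
  have q0 : (0 < #[a] %/ #[x])%N by rewrite divn_gt0 // dvdn_leq.
  by rewrite -{1}(divnK dx) mulKn.
rewrite /osc_adj gh /=; case: eqP => //= ne.
apply/existsP; exists (a ^+ (#[a] %/ #[g]))%g; rewrite groupX //=.
apply/existsP; exists (a ^+ (#[a] %/ #[h]))%g; rewrite groupX //=.
rewrite !ord // !eqxx /= -!expgD addnC eqxx andbT.
by apply/eqP => E; apply: ne; rewrite -(ord g gG) -(ord h hG) E.
Qed.
Local Open Scope ring_scope.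
Lemma det_JI (R : comNzRingType) m (al be : R) :
  \det (al%:M + be *: const_mx 1 : 'M[R]_(1 + m)) = (al + (1+m)%:R * be) * al ^+ m.
Proof.
pose L : 'M[R]_(1+m) := block_mx 1 0 (const_mx (-1)) 1.
pose U : 'M[R]_(1+m) := block_mx 1 0 (const_mx 1) 1.
have dL : \det L = 1 by rewrite det_lblock !det1 mulr1.
have dU : \det U = 1 by rewrite det_lblock !det1 mulr1.
have -> : \det (al%:M + be *: const_mx 1 : 'M[R]_(1 + m)) =
  \det (L *m (al%:M + be *: const_mx 1) *m U).
  by rewrite !det_mulmx dL dU mul1r mulr1.
rewrite [al%:M]scalar_mx_block -[const_mx 1](block_mx_const 1) scale_block_mx add_block_mx.
rewrite mulmx_block mulmx_block.
rewrite !(mul1mx, mul0mx, mulmx1, mulmx0, add0r, addr0, scaler0, mulmxDl, mulmxDr, mul_mx_scalar, mul_scalar_mx, scalemxAl, scalemxAr).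
set A := block_mx _ _ _ _.
have -> : A = block_mx (al + (1+m)%:R * be)%:M (be *: const_mx 1) 0 al%:M.
  rewrite /A; f_equal; apply/matrixP => i j; rewrite !mxE ?big_ord1 /=.
  all: try (under eq_bigr do rewrite ?big_ord1 !mxE).
  all: rewrite ?mxE ?sumr_const ?card_ord /= ?[i]ord1 ?[j]ord1 ?eqxx /=.
  all: try (under eq_bigr do rewrite ?big_ord1 !mxE).
  all: rewrite ?sumr_const ?card_ord.
  all: try (under eq_bigr do rewrite ?big_ord1 !mxE).
  all: rewrite ?sumr_const ?card_ord.
  all: try ring.
by rewrite det_ublock !det_scalar expr1.
Qed.
Lemma char_JI (R : comNzRingType) N m (c : R) : N = m.+1 ->
  char_poly (\matrix_(i, j) (if i == j then 0 else c) : 'M_N) =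
  ('X + c%:P) ^+ m * ('X + c%:P + (1 + m)%:R * - c%:P).
Proof.
move=> ->.
rewrite /char_poly (_ : char_poly_mx _ = (('X + c%:P)%:M + (- c%:P) *: const_mx 1 : 'M_(1 + m))).
  by rewrite det_JI mulrC.
apply/matrixP => i j; rewrite !mxE; case: (i == j) => /=; rewrite ?mulr1n ?mulr0n; ring.
Qed.

Local Close Scope ring_scope.
Local Close Scope group_scope.

Theorem corollary4p6 (R : rcfType) (n : nat) (gT : finGroupType)
    (G : {group gT}) (a b : gT) :
  (2 <= n)%N ->
  (a ^+ (4 * n) = 1)%g -> (b ^+ 2 = 1)%g -> (b * a = a ^+ (2 * n - 1) * b)%g ->
  G :=: <<[set a; b]>>%g -> #|G| = (8 * n)%N ->
  char_poly (sombor_mx R G) =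
    (('X + (((8 * n - 1)%:R * Num.sqrt 2%:R)%:P)) ^+ (8 * n - 1) *
     ('X - ((((8 * n - 1) ^ 2)%:R * Num.sqrt 2%:R)%:P)))%R.
Proof.
move=> n2 Ha Hb Hba HG HGc.
have n1 : (1 <= n)%N by lia.
have comp := @osc_complete _ _ _ _ _ n1 Ha Hb Hba HG HGc.
have deg : forall g, g \in G -> osc_deg G g = (8 * n - 1)%N.
  move=> g gG; rewrite /osc_deg.
  have -> : [set h in G | osc_adj G g h] = G :\ g.
    apply/setP => h; rewrite !inE; case hG: (h \in G); rewrite ?andbF ?andbT //=.
    case: (eqVneq h g) => [->|nhg] /=; first by rewrite /osc_adj eqxx.
    by rewrite comp // eq_sym.
  by have := cardsD1 g G; rewrite gG HGc; lia.
set c : R := ((8 * n - 1)%:R * Num.sqrt 2%:R)%R.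
have -> : sombor_mx R G = (\matrix_(i, j) (if i == j then 0 else c))%R.
  apply/matrixP => i j; rewrite !mxE /=.
  case: (eqVneq i j) => [->|nij]; first by rewrite /osc_adj eqxx.
  have ne : enum_val i != enum_val j by apply: contra nij => /eqP /enum_val_inj ->.
  rewrite comp ?enum_valP // !deg ?enum_valP //.
  by rewrite -mulr2n -(mulr_natl _ 2) sqrtrM // sqrtr_sqr ger0_norm // mulrC.
rewrite (@char_JI _ _ (8 * n - 1)%N _); last by rewrite HGc; lia.
rewrite /c; congr (_ * _)%R.
move: (8 * n - 1)%N => m.
rewrite natrX !polyCM ?rmorphXn /=. rewrite !polyC_natr natrD.
ring.
Qed.
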